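(* Consider the following regulation game. A random triple $(\theta,s,d)$ (agent type, training state, deployment state) has joint distribution $\pi$. Prediction functions are vectors $f\in\mathbb{R}^n$. Given $s$ (and $\theta$), expected agent utility and expected principal welfare are $\overline{U}_\theta(f;s) = -(f-\bar u)'\overline{\Omega}_U(f-\bar u)$ and $\overline{W}(f;s) = -(f-\bar w)'\overline{\Omega}_W(f-\bar w)$, with bliss points $\bar u=\bar u(s,\theta)$, $\bar w=\bar w(s)\in\mathbb{R}^n$ and symmetric positive semidefinite weight matrices. The principal first (knowing only $\pi$) chooses a linear explainer, i.e. a $k\times n$ real matrix $\mathcal{E}$, and possibly an ex-ante restriction $\mathcal{F}=\{f: Af=a\}$ with $A\in\mathbb{R}^{m\times n}$, $a\in\mathbb{R}^m$ not depending on $s,\theta$; after observing $s$ she dictates the value $\mathcal{E}f=e(s)$ of the explanation (failing the audit has infinite cost to the agent). The agent, knowing $\theta$ and $s$, chooses $f$ maximizing $\overline{U}_\theta(f;s)$ subject to $Af=a$ and $\mathcal{E}f=e(s)$. Assume $\overline{\Omega}_U$ is fixed (non-random) and of full rank, and that $\operatorname{rank}\mathop{E}_\pi[(\bar u-\bar w)(\bar u-\bar w)']\le k$. Then there is an explainer that achieves the first-best solution $f=\bar w$ of the principal, yielding maximal expected welfare $\overline{W}(f;s)\equiv 0$ across all states and for all agent types. Further, the optimal solution does not include any ex-ante restrictions.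
   Context: The first-best solution is the principal's bliss point $f=\bar w(s)$. *)

(* Defs.v *)
From HB Require Import structures.
From mathcomp Require Import all_boot all_order all_algebra.
From mathcomp Require Import all_classical all_reals all_analysis.
Set Implicit Arguments. Unset Strict Implicit. Unset Printing Implicit Defensive.
Import Order.TTheory GRing.Theory Num.Theory.
Local Open Scope ring_scope.

Definition quad_payoff (R : realType) (n : nat) (Om : 'M[R]_n) (b f : 'cV[R]_n) : R :=
  - ((f - b)^T *m Om *m (f - b)) 0 0.

Definition sym_psd (R : realType) (n : nat) (Om : 'M[R]_n) : Prop :=
  Om^T = Om /\ forall x : 'cV[R]_n, 0 <= (x^T *m Om *m x) 0 0.

(* f solves the agent's problem: maximize quad_payoff OmU ub subject to the
   audit constraint  Ex f = e  (no ex-ante restriction A f = a). *)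
Definition agent_best_response (R : realType) (n k : nat) (OmU : 'M[R]_n)
    (ub : 'cV[R]_n) (Ex : 'M[R]_(k, n)) (e : 'cV[R]_k) (f : 'cV[R]_n) : Prop :=
  Ex *m f = e /\
  forall g : 'cV[R]_n, Ex *m g = e -> quad_payoff OmU ub g <= quad_payoff OmU ub f.

Definition second_moment (R : realType) (d : measure_display) (T : measurableType d)
    (P : probability T R) (n : nat) (v : T -> 'cV[R]_n) : 'M[R]_n :=
  \matrix_(i, j) fine (\int[P]_(w in setT) ((v w i 0 * v w j 0)%:E))%E.

(* Main.v *)
Require Import Defs.
From HB Require Import structures.
From mathcomp Require Import all_boot all_order all_algebra.
From mathcomp Require Import all_classical all_reals all_analysis.
From mathcomp Require Import ring lra.
Set Implicit Arguments. Unset Strict Implicit. Unset Printing Implicit Defensive.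
Import Order.TTheory GRing.Theory Num.Theory.
Local Open Scope ring_scope.

Definition bl (R : realType) (n : nat) (O : 'M[R]_n) (x y : 'cV[R]_n) : R :=
  (x^T *m O *m y) 0 0.

Lemma blDl (R : realType) n (O : 'M[R]_n) x y z : bl O (x + y) z = bl O x z + bl O y z.
Proof. by rewrite /bl linearD /= !mulmxDl mxE. Qed.
Lemma blDr (R : realType) n (O : 'M[R]_n) x y z : bl O z (x + y) = bl O z x + bl O z y.
Proof. by rewrite /bl !mulmxDr mxE. Qed.
Lemma blNl (R : realType) n (O : 'M[R]_n) x z : bl O (- x) z = - bl O x z.
Proof. by rewrite /bl linearN /= !mulNmx mxE. Qed.
Lemma blNr (R : realType) n (O : 'M[R]_n) x z : bl O z (- x) = - bl O z x.
Proof. by rewrite /bl !mulmxN mxE. Qed.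
Lemma blZl (R : realType) n (O : 'M[R]_n) (t : R) x z : bl O (t *: x) z = t * bl O x z.
Proof. by rewrite /bl linearZ /= -!scalemxAl mxE. Qed.
Lemma blZr (R : realType) n (O : 'M[R]_n) (t : R) x z : bl O z (t *: x) = t * bl O z x.
Proof. by rewrite /bl -!scalemxAr mxE. Qed.
Lemma blC (R : realType) n (O : 'M[R]_n) x y : O^T = O -> bl O x y = bl O y x.
Proof.
move=> hO; rewrite /bl; transitivity ((x^T *m O *m y)^T 0 0); first by rewrite [in RHS]mxE.
by rewrite !trmx_mul trmxK hO mulmxA.
Qed.

Lemma pd0 (R : realType) n (O : 'M[R]_n) : sym_psd O -> \rank O = n ->
  forall h, bl O h h = 0 -> h = 0.
Proof.
move=> [hs hp] hr h h0.
have key : forall y, bl O y h = 0.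
  move=> y; set c := bl O y h; set q := bl O y y.
  have q0 : 0 <= q by exact: hp.
  have H t : 0 <= 2 * t * c + t ^+ 2 * q.
    have := hp (h + t *: y); rewrite -/(bl O _ _) blDl !blDr !blZl !blZr h0.
    rewrite (blC _ _ hs) -/c -/q => H; nra.
  pose t := - c / (q + 1).
  have tq : t * (q + 1) = - c by rewrite /t mulfVK // gt_eqF // ltr_pwDr.
  have := H t; nra.
have Oh : O *m h = 0.
  apply/matrixP => i j; rewrite ord1 [RHS]mxE.
  have := key (delta_mx i 0); rewrite /bl trmx_delta -rowE -row_mul mxE => ->.
  by [].
have hu : O \in unitmx by rewrite -row_free_unit /row_free hr.
by rewrite -[h]mul1mx -(mulVmx hu) -mulmxA Oh mulmx0.
Qed.

Lemma payoff_eq (R : realType) n (O : 'M[R]_n) (ub wb g : 'cV[R]_n) : O^T = O ->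
  quad_payoff O ub g =
  - bl O (g - wb) (g - wb) + 2 * bl O (g - wb) (ub - wb) - bl O (ub - wb) (ub - wb).
Proof.
move=> hs; rewrite /quad_payoff -/(bl O _ _).
have -> : g - ub = (g - wb) + - (ub - wb) by rewrite opprB addrA subrK.
move: (g - wb) (ub - wb) => h D.
rewrite blDl !blDr !blNl !blNr opprK (blC D h hs); lra.
Qed.

Lemma best (R : realType) n k (O : 'M[R]_n) (Ex : 'M[R]_(k,n)) (ub wb : 'cV[R]_n) :
  sym_psd O -> \rank O = n ->
  (forall h, Ex *m h = 0 -> bl O h (ub - wb) = 0) ->
  forall f, agent_best_response O ub Ex (Ex *m wb) f <-> f = wb.
Proof.
move=> hO hr hk f.
have ker g : Ex *m g = Ex *m wb -> quad_payoff O ub g = - bl O (g - wb) (g - wb) - bl O (ub - wb) (ub - wb).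
  move=> hg; rewrite (payoff_eq _ wb _ hO.1) hk ?mulr0 ?addr0 //.
  by rewrite mulmxBr hg subrr.
have ge0 g : 0 <= bl O g g by exact: hO.2.
split.
  move=> [hf hb]; have := hb wb erefl; rewrite (ker f hf) (ker wb erefl) subrr.
  move=> H; apply/eqP; rewrite -subr_eq0; apply/eqP; apply: (pd0 hO hr).
  have := ge0 (f - wb); have : bl O 0 0 = 0 by rewrite /bl mulmx0 mxE.
  move=> Z; rewrite Z in H; lra.
move=> ->; split => // g hg; rewrite (ker g hg) (ker wb erefl) subrr.
have : bl O 0 0 = 0 by rewrite /bl mulmx0 mxE.
have := ge0 (g - wb); lra.
Qed.
Lemma row_ae (R : realType) (d : measure_display) (Omega : measurableType d)
    (P : probability Omega R) n (D : Omega -> 'cV[R]_n)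
    (HI : forall i j : 'I_n, P.-integrable setT (fun w => (D w i 0 * D w j 0)%:E))
    (v : 'rV[R]_n) :
  v *m second_moment P D = 0 -> {ae P, forall w, (v *m D w) 0 0 = 0}.
Proof.
move=> hv.
pose F : Omega -> \bar R := fun w => \sum_(j < n) \sum_(i < n) ((v 0 i * v 0 j)%:E * (D w i 0 * D w j 0)%:E)%E.
have e1 : (fun w => (((v *m D w) 0 0) ^+ 2)%:E) = F.
  apply/funext => w; rewrite /F expr2 [X in X * _]mxE big_distrl /= -sumEFin.
  apply: eq_bigr => j _; rewrite mxE big_distrr /= -sumEFin.
  apply: eq_bigr => i _; rewrite -EFinM; congr EFin; ring.
have iF : P.-integrable setT F.
  apply: integrable_sum => // j _; apply: integrable_sum => // i _.
  exact: integrableZl.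
have Hint : (\int[P]_(w in setT) F w = 0)%E.
  rewrite integral_sum //; last first.
    by move=> j; apply: integrable_sum => // i _; exact: integrableZl.
  transitivity (\sum_(j < n) \sum_(i < n) ((v 0 i * v 0 j * second_moment P D i j)%:E))%E.
    apply: eq_bigr => j _; rewrite integral_sum //; last by move=> i; exact: integrableZl.
    apply: eq_bigr => i _; rewrite integralZl // [in RHS]EFinM; congr (mule _ _).
    by rewrite mxE fineK //; exact: integrable_fin_num.
  under eq_bigr do rewrite sumEFin.
  rewrite sumEFin.
  congr EFin.
  transitivity (((v *m second_moment P D) *m v^T) 0 0); last first.
    by rewrite hv mul0mx mxE.
  rewrite mxE; apply: eq_bigr => j _; rewrite !mxE big_distrl /=.
  by apply: eq_bigr => i _; rewrite mxE; ring.
have := (ae_eq_integral_abs P measurableT (measurable_int _ iF)).1.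
have aF : forall x, `|F x|%E = F x.
  by move=> x; rewrite -e1 /= ger0_norm // sqr_ge0.
under eq_integral do rewrite aF.
move=> /(_ Hint); apply: filterS => w /(_ I).
rewrite -e1 /= => /eqP; rewrite eqe sqrf_eq0 => /eqP.
by [].
Qed.

Lemma sm_sym (R : realType) (d : measure_display) (Omega : measurableType d)
    (P : probability Omega R) n (D : Omega -> 'cV[R]_n) :
  (second_moment P D)^T = second_moment P D.
Proof.
apply/matrixP => i j; rewrite !mxE; congr fine; apply: eq_integral => w _.
by rewrite mulrC.
Qed.

Lemma col_ae (R : realType) (d : measure_display) (Omega : measurableType d)
    (P : probability Omega R) n (D : Omega -> 'cV[R]_n)
    (HI : forall i j : 'I_n, P.-integrable setT (fun w => (D w i 0 * D w j 0)%:E)) :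
  {ae P, forall w, forall x : 'cV[R]_n, second_moment P D *m x = 0 ->
     (x^T *m D w) 0 0 = 0}.
Proof.
set M := second_moment P D.
pose K := kermx M.
have hK : forall i : 'I_n, {ae P, forall w, (row i K *m D w) 0 0 = 0}.
  move=> i; apply: row_ae => //; by rewrite -row_mul mulmx_ker row0.
have := @filter_forall Omega _ (fun i w => (row i K *m D w) 0 0 = 0) _ (ae_filter_ringOfSetsType P) hK; apply: filterS => w Hw x hx.
have : (x^T <= K)%MS.
  apply/sub_kermxP; by rewrite -(sm_sym P D : M^T = M) -trmx_mul hx trmx0.
move=> /submxP [y ->]; rewrite -mulmxA.
have -> : K *m D w = 0.
  apply/matrixP => i j; rewrite ord1 [RHS]mxE -(Hw i) -row_mul.
  by rewrite [RHS]mxE.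
by rewrite mulmx0 mxE.
Qed.

Theorem proposition1 (R : realType) (d : measure_display) (Omega : measurableType d)
    (P : probability Omega R) (Theta S : Type)
    (theta : Omega -> Theta) (s : Omega -> S)
    (n k : nat)
    (ubar : S -> Theta -> 'cV[R]_n) (wbar : S -> 'cV[R]_n)
    (OmU : 'M[R]_n) (OmW : S -> 'M[R]_n) :
  sym_psd OmU -> \rank OmU = n ->
  (forall x, sym_psd (OmW x)) ->
  (forall i j : 'I_n, P.-integrable setT
     (fun w => (((ubar (s w) (theta w) - wbar (s w)) i 0
                * (ubar (s w) (theta w) - wbar (s w)) j 0)%R)%:E)) ->
  (\rank (second_moment P (fun w => (ubar (s w) (theta w) - wbar (s w))%R)) <= k)%N ->
  exists (Ex : 'M[R]_(k, n)) (e : S -> 'cV[R]_k),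
    {ae P, forall w,
      forall f : 'cV[R]_n,
        agent_best_response OmU (ubar (s w) (theta w)) Ex (e (s w)) f <->
        (f = wbar (s w) /\ quad_payoff (OmW (s w)) (wbar (s w)) f = 0)}.
Proof.
move=> hO hr hW HI hk.
set D := fun w => ubar (s w) (theta w) - wbar (s w).
set M := second_moment P D.
pose A := M *m OmU.
pose r := \rank A.
have rk : (r <= k)%N := leq_trans (mxrankM_maxl _ _) hk.
pose Ex : 'M[R]_(k,n) := pid_mx r *m row_base A.
have hA : A = (col_base A *m (pid_mx r : 'M[R]_(r,k))) *m Ex.
  rewrite /Ex mulmxA -(mulmxA (col_base A)) mul_pid_mx minnn (minn_idPr rk).
  by rewrite pid_mx_1 mulmx1 mulmx_base.
exists Ex, (fun x => Ex *m wbar x).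
have := col_ae HI; apply: filterS => w Hw f.
rewrite (best hO hr _ f).
  split => [->|[]//]; split => //.
  by rewrite /quad_payoff subrr mulmx0 mxE oppr0.
move=> h hh; rewrite /bl.
have : M *m (OmU *m h) = 0.
  by rewrite mulmxA -/A hA -(mulmxA _ Ex h) hh mulmx0.
by move/Hw; rewrite trmx_mul (proj1 hO).
Qed.
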